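(* Let $P_1(t),\dots,P_J(t)$ be pairwise relatively prime reciprocal polynomials and $P(t)=\prod_{j=1}^JP_j(t)$. Then the canonical projections $\mathfrak{OA}/\mathfrak I_{P(t)}\to\mathfrak{OA}/\mathfrak I_{P_j(t)}$ induce a Lie algebra isomorphism $\mathfrak{OA}/\mathfrak I_{P(t)}\xrightarrow{\sim}\prod_{j=1}^J\mathfrak{OA}/\mathfrak I_{P_j(t)}$.
   Context: Work over $\mathbb C$. $\mathfrak{sl}_2$ has basis $e,f,h$ with $[e,f]=h$, $[h,e]=2e$, $[h,f]=-2f$. $L(\mathfrak{sl}_2)=\mathbb C[t,t^{-1}]\otimes\mathfrak{sl}_2$ is the loop algebra with bracket $[p(t)x,q(t)y]=p(t)q(t)[x,y]$. The Onsager algebra is the Lie subalgebra $\mathfrak{OA}=\{p(t)e+p(t^{-1})f+q(t)h:\ p,q\in\mathbb C[t,t^{-1}],\ q(t^{-1})=-q(t)\}$ of $L(\mathfrak{sl}_2)$. A reciprocal polynomial is a nonconstant monic $P\in\mathbb C[t]$ with $P(t)=\pm t^{\deg P}P(t^{-1})$. For a reciprocal polynomial $P$, $\mathfrak I_{P(t)}=\{p(t)e+p(t^{-1})f+q(t)h\in\mathfrak{OA}:\ p(t),q(t)\in P(t)\mathbb C[t,t^{-1}]\}$; it is an ideal of $\mathfrak{OA}$, and $\mathfrak I_{P}\subseteq\mathfrak I_Q$ when $Q\mid P$. *)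

(* Defs.v *)
From HB Require Import structures.
From mathcomp Require Import all_boot all_order all_algebra.
From mathcomp Require Import complex Rstruct.
Set Implicit Arguments. Unset Strict Implicit. Unset Printing Implicit Defensive.
Import GRing.Theory.
Local Open Scope ring_scope.

Definition C : fieldType := Rdefinitions.R[i].

(* ---------- Laurent polynomials C[t,t^-1] ----------
   A Laurent polynomial is represented by a pair (a, n) with a : {poly C},
   n : nat, standing for t^{-n} a(t).  Two representatives denote the same
   Laurent polynomial iff [leqL] holds. *)
Definition laurent := ({poly C} * nat)%type.

(* t^{-n} a = t^{-m} b  <->  a t^m = b t^n *)
Definition leqL (x y : laurent) : Prop := x.1 * 'X^(y.2) = y.1 * 'X^(x.2).
Definition addL (x y : laurent) : laurent := (x.1 * 'X^(y.2) + y.1 * 'X^(x.2), (x.2 + y.2)%N).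
Definition oppL (x : laurent) : laurent := (- x.1, x.2).
Definition mulL (x y : laurent) : laurent := (x.1 * y.1, (x.2 + y.2)%N).
Definition polyL (p : {poly C}) : laurent := (p, 0%N).
(* p(t) |-> p(t^{-1}):  for p = t^{-n} a with s = size a,
   p(t^{-1}) = t^n sum_{i<s} a_i t^{-i} = t^{-s} sum_{k <= n+s} a_{n+s-k} t^k. *)
Definition invL (x : laurent) : laurent :=
  (\poly_(k < (x.2 + size x.1).+1) x.1`_(x.2 + size x.1 - k), size x.1).

Definition divL (P : {poly C}) (p : laurent) : Prop :=
  exists r : laurent, leqL p (mulL (polyL P) r).

(* ---------- the loop algebra L(sl2) = C[t,t^-1] (x) sl2 ----------
   An element p(t) e + p'(t) f + q(t) h is the triple (p, p', q). *)
Record loop := Loop { le : laurent; lf : laurent; lh : laurent }.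
Definition loop_sub (x y : loop) : loop :=
  Loop (addL (le x) (oppL (le y))) (addL (lf x) (oppL (lf y))) (addL (lh x) (oppL (lh y))).

(* Membership in the Onsager algebra:
   p(t) e + p(t^{-1}) f + q(t) h with q(t^{-1}) = -q(t). *)
Definition inOA (x : loop) : Prop :=
  leqL (lf x) (invL (le x)) /\ leqL (invL (lh x)) (oppL (lh x)).

Definition inI (P : {poly C}) (x : loop) : Prop :=
  inOA x /\ divL P (le x) /\ divL P (lh x).

(* t^{deg P} P(t^{-1}) *)
Definition recip (P : {poly C}) : {poly C} :=
  \poly_(i < size P) P`_((size P).-1 - i).

Definition reciprocal (P : {poly C}) : Prop :=
  P \is monic /\ (1 < size P)%N /\ (P = recip P \/ P = - recip P).

(* Main.v *)
Require Import Defs.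
From HB Require Import structures.
From mathcomp Require Import all_boot all_order all_algebra ring.
From mathcomp Require Import complex Rstruct.
Import GRing.Theory.
Local Open Scope ring_scope.
Definition F := {fraction {poly C}}.
Definition cF : C -> F := (@tofrac _) \o polyC.
Definition ev (z : F) (a : {poly C}) : F := (map_poly cF a).[z].

Lemma ev_sum z (a : {poly C}) N : (size a <= N)%N -> ev z a = \sum_(i < N) cF a`_i * z ^+ i.
Proof.
move=> h; rewrite /ev (horner_coef_wide _ (leq_trans (size_poly _ _) h)).
by apply: eq_bigr => i _; rewrite coef_map.
Qed.

Lemma revsum (y z : F) N (a : {poly C}) : y * z = 1 -> (size a <= N.+1)%N ->
  \sum_(k < N.+1) cF a`_(N - k) * y ^+ k = ev z a * y ^+ N.
Proof.
move=> yz ha; rewrite (@ev_sum _ _ _ ha) mulr_suml.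
rewrite (reindex_inj rev_ord_inj) /=; apply: eq_bigr => k _.
have hk : (k <= N)%N by rewrite -ltnS.
rewrite subSS subKn // -mulrA; congr (_ * _).
have -> : y ^+ N = y ^+ (N - k) * y ^+ k by rewrite -exprD subnK.
rewrite mulrCA -exprMn.
by rewrite [z * y]mulrC yz expr1n mulr1.
Qed.

Definition Xf : F := tofrac 'X.
Definition Xi : F := Xf^-1.
Lemma Xf_neq0 : Xf != 0. Proof. by rewrite /Xf tofrac_eq0 polyX_eq0. Qed.
Lemma XfXi : Xf * Xi = 1. Proof. by rewrite /Xi divff // Xf_neq0. Qed.
Lemma XiXf : Xi * Xf = 1. Proof. by rewrite mulrC XfXi. Qed.
Lemma XfnXin n : Xf ^+ n * Xi ^+ n = 1. Proof. by rewrite -exprMn XfXi expr1n. Qed.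
Lemma XinXfn n : Xi ^+ n * Xf ^+ n = 1. Proof. by rewrite mulrC XfnXin. Qed.

Definition E (x : laurent) : F := ev Xf x.1 * Xi ^+ x.2.
Definition Ei (x : laurent) : F := ev Xi x.1 * Xf ^+ x.2.

Lemma evD z a b : ev z (a + b) = ev z a + ev z b.
Proof. by rewrite /ev rmorphD hornerD. Qed.
Lemma evM z a b : ev z (a * b) = ev z a * ev z b.
Proof. by rewrite /ev rmorphM hornerM. Qed.
Lemma evN z a : ev z (- a) = - ev z a.
Proof. by rewrite /ev rmorphN hornerN. Qed.
Lemma evC z c : ev z c%:P = cF c.
Proof. by rewrite /ev map_polyC hornerC. Qed.
Lemma ev1 z : ev z 1 = 1.
Proof. by rewrite /ev rmorph1 hornerC. Qed.
Lemma evXn z n : ev z 'X^n = z ^+ n.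
Proof. by rewrite /ev map_polyXn hornerXn. Qed.

Lemma evXf p : ev Xf p = tofrac p.
Proof.
rewrite (@ev_sum _ _ (size p)) //.
have -> : tofrac p = tofrac (\poly_(i < size p) p`_i) by rewrite coefK.
rewrite poly_def rmorph_sum; apply: eq_bigr => i _.
by rewrite -mul_polyC rmorphM rmorphXn.
Qed.

Lemma Xfn_neq0 n : Xf ^+ n != 0. Proof. by rewrite expf_neq0 // Xf_neq0. Qed.
Lemma XiV n : Xi ^+ n = (Xf ^+ n)^-1. Proof. by rewrite /Xi exprVn. Qed.

Lemma E_leq x y : leqL x y <-> E x = E y.
Proof.
rewrite /leqL /E !XiV; split.
  move=> h; apply/eqP; rewrite eqr_div ?Xfn_neq0 // !evXf /Xf -!tofracXn -!tofracM h //.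
move=> /eqP; rewrite eqr_div ?Xfn_neq0 // !evXf /Xf -!tofracXn -!tofracM tofrac_eq.
by move/eqP.
Qed.

Lemma addfrac (A B a b c d : F) : a * c = 1 -> b * d = 1 ->
  (A * b + B * a) * (c * d) = A * c + B * d.
Proof.
move=> h1 h2; rewrite mulrDl.
have -> : A * b * (c * d) = A * c * (b * d) by ring.
have -> : B * a * (c * d) = B * d * (a * c) by ring.
by rewrite h1 h2 !mulr1.
Qed.

Lemma E_add x y : E (addL x y) = E x + E y.
Proof. by rewrite /E /addL /= evD !evM !evXn exprD addfrac // XfnXin. Qed.
Lemma Ei_add x y : Ei (addL x y) = Ei x + Ei y.
Proof. by rewrite /Ei /addL /= evD !evM !evXn exprD addfrac // XinXfn. Qed.
Lemma E_opp x : E (oppL x) = - E x.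
Proof. by rewrite /E /= evN mulNr. Qed.
Lemma Ei_opp x : Ei (oppL x) = - Ei x.
Proof. by rewrite /Ei /= evN mulNr. Qed.
Lemma E_mul x y : E (mulL x y) = E x * E y.
Proof. rewrite /E /= evM exprD; ring. Qed.
Lemma Ei_mul x y : Ei (mulL x y) = Ei x * Ei y.
Proof. rewrite /Ei /= evM exprD; ring. Qed.
Lemma E_poly p : E (polyL p) = ev Xf p.
Proof. by rewrite /E /= expr0 mulr1. Qed.
Lemma Ei_poly p : Ei (polyL p) = ev Xi p.
Proof. by rewrite /Ei /= expr0 mulr1. Qed.

Lemma Ei_leq x y : leqL x y -> Ei x = Ei y.
Proof.
rewrite /leqL /Ei => /(congr1 (ev Xi)); rewrite !evM !evXn => h.
rewrite -[LHS]mulr1 -(XinXfn y.2).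
have -> : ev Xi x.1 * Xf ^+ x.2 * (Xi ^+ y.2 * Xf ^+ y.2)
  = (ev Xi x.1 * Xi ^+ y.2) * Xf ^+ x.2 * Xf ^+ y.2 by ring.
rewrite h.
have -> : ev Xi y.1 * Xi ^+ x.2 * Xf ^+ x.2 * Xf ^+ y.2
  = ev Xi y.1 * Xf ^+ y.2 * (Xi ^+ x.2 * Xf ^+ x.2) by ring.
by rewrite XinXfn mulr1.
Qed.

Lemma ev_invL z x : ev z (invL x).1 =
  \sum_(k < (x.2 + size x.1).+1) cF x.1`_(x.2 + size x.1 - k) * z ^+ k.
Proof.
rewrite /invL /= (@ev_sum _ _ (x.2 + size x.1).+1) ?size_poly //.
by apply: eq_bigr => k _; rewrite coef_poly ltn_ord.
Qed.

Lemma E_invL x : E (invL x) = Ei x.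
Proof.
rewrite /E ev_invL (@revsum _ Xi) ?XfXi //; last by rewrite leqW // leq_addl.
by rewrite /Ei /= exprD -!mulrA XfnXin mulr1.
Qed.

Lemma Ei_invL x : Ei (invL x) = E x.
Proof.
rewrite /Ei ev_invL (@revsum _ Xf) ?XiXf //; last by rewrite leqW // leq_addl.
by rewrite /E /= exprD -!mulrA XinXfn mulr1.
Qed.

Lemma recip_ev (P : {poly C}) : (0 < size P)%N -> ev Xf (recip P) = ev Xi P * Xf ^+ (size P).-1.
Proof.
move=> hP; rewrite /recip (@ev_sum _ _ (size P)) ?size_poly //.
rewrite -(@revsum _ Xi); last by rewrite prednK.
  by rewrite prednK //; apply: eq_bigr => k _; rewrite coef_poly ltn_ord.
exact: XfXi.
Qed.

Definition D (P : {poly C}) (f : F) := exists r : laurent, f = ev Xf P * E r.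

Lemma D_add P f g : D P f -> D P g -> D P (f + g).
Proof. by move=> [r ->] [s ->]; exists (addL r s); rewrite E_add mulrDr. Qed.
Lemma D_opp P f : D P f -> D P (- f).
Proof. by move=> [r ->]; exists (oppL r); rewrite E_opp mulrN. Qed.
Lemma D_sub P f g : D P f -> D P g -> D P (f - g).
Proof. by move=> hf hg; apply: D_add => //; apply: D_opp. Qed.
Lemma D_mulE P y f : D P f -> D P (E y * f).
Proof. by move=> [r ->]; exists (mulL y r); rewrite E_mul mulrCA. Qed.
Lemma D_dvd (Q R : {poly C}) f : D (Q * R) f -> D Q f.
Proof.
by move=> [r ->]; exists (mulL (polyL R) r); rewrite E_mul E_poly evM mulrA.
Qed.
Lemma D_one y : D 1 (E y).
Proof. by exists y; rewrite ev1 mul1r. Qed.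
Lemma D_mulP (P Q : {poly C}) y : D P (ev Xf (P * Q) * E y).
Proof. by exists (mulL (polyL Q) y); rewrite E_mul E_poly evM mulrA. Qed.

Lemma D_coprime (p q : {poly C}) f : coprimep p q -> D p f -> D q f -> D (p * q) f.
Proof.
move=> /Bezout_eq1_coprimepP [[u v] /= huv] [r1 e1] [r2 e2].
exists (addL (mulL (polyL u) r2) (mulL (polyL v) r1)).
rewrite E_add !E_mul !E_poly.
have -> : f = f * ev Xf (u * p + v * q) by rewrite huv ev1 mulr1.
rewrite evD !evM mulrDr.
rewrite {1}e2 e1; ring.
Qed.

Lemma D_Ei (P : {poly C}) y : reciprocal P -> D P (E y) -> D P (Ei y).
Proof.
move=> [_ [hs hr]] [r hy].
have [c hc] : exists c, recip P = c * P.
  case: hr => hr; [exists 1; rewrite mul1r | exists (-1); rewrite mulN1r].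
    by rewrite {2}hr.
  by rewrite {2}hr opprK.
have : E y = E (mulL (polyL P) r) by rewrite E_mul E_poly.
move=> /E_leq /Ei_leq ->; rewrite Ei_mul Ei_poly -E_invL.
have -> : ev Xi P = ev Xf (recip P) * Xi ^+ (size P).-1.
  rewrite recip_ev; last by apply: ltn_trans hs.
  by rewrite -mulrA XfnXin mulr1.
exists (mulL (c, (size P).-1) (invL r)).
rewrite hc evM E_mul /E /=; ring.
Qed.

Lemma coprime_prod J (Ps : 'I_J -> {poly C}) p (r : seq 'I_J) :
  (forall j, j \in r -> coprimep p (Ps j)) -> coprimep p (\prod_(j <- r) Ps j).
Proof.
elim: r => [|i r IH] h; first by rewrite big_nil coprimep1.
rewrite big_cons coprimepMr h ?mem_head //= IH // => j hj.
by apply: h; rewrite in_cons hj orbT.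
Qed.

Lemma D_prod_seq J (Ps : 'I_J -> {poly C}) (r : seq 'I_J) y :
  (forall i j : 'I_J, i != j -> coprimep (Ps i) (Ps j)) -> uniq r ->
  (forall j, j \in r -> D (Ps j) (E y)) -> D (\prod_(j <- r) Ps j) (E y).
Proof.
move=> hc; elim: r => [|i r IH] /=; first by rewrite big_nil => _ _; apply: D_one.
move=> /andP [nir ur] h; rewrite big_cons; apply: D_coprime.
- apply: coprime_prod => j hj; apply: hc; apply/eqP => e.
  by move: nir; rewrite e hj.
- by apply: h; rewrite mem_head.
- by apply: IH => // j hj; apply: h; rewrite in_cons hj orbT.
Qed.

Lemma CRT J (Ps : 'I_J -> {poly C}) (g : 'I_J -> laurent) (r : seq 'I_J) :
  (forall i j : 'I_J, i != j -> coprimep (Ps i) (Ps j)) -> uniq r ->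
  exists h, forall j, j \in r -> D (Ps j) (E h - E (g j)).
Proof.
move=> hc; elim: r => [|i r IH] /=; first by move=> _; exists (polyL 0).
move=> /andP [nir ur]; have [h' hh'] := IH ur.
set Q := \prod_(j <- r) Ps j.
have : coprimep (Ps i) Q.
  apply: coprime_prod => j hj; apply: hc; apply/eqP => e.
  by move: nir; rewrite e hj.
move=> /Bezout_eq1_coprimepP [[u v] /= huv].
have h1 : ev Xf u * ev Xf (Ps i) = 1 - ev Xf v * ev Xf Q.
  by have := congr1 (ev Xf) huv; rewrite evD !evM ev1 => <-; rewrite addrK.
exists (addL h' (mulL (polyL (v * Q)) (addL (g i) (oppL h')))).
move=> j; rewrite in_cons => /orP [/eqP -> | hj].
  have -> : E (addL h' (mulL (polyL (v * Q)) (addL (g i) (oppL h')))) - E (g i)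
    = ev Xf (Ps i * u) * E (addL h' (oppL (g i))).
    rewrite !E_add !E_mul !E_poly !E_add !E_opp !evM [ev Xf (Ps i) * _]mulrC h1; ring.
  exact: D_mulP.
rewrite E_add E_mul E_poly.
have -> : E h' + ev Xf (v * Q) * E (addL (g i) (oppL h')) - E (g j)
  = (E h' - E (g j)) + ev Xf (v * Q) * E (addL (g i) (oppL h')) by ring.
apply: D_add; first exact: hh'.
rewrite /Q (bigD1_seq j) //= [v * (_ * _)]mulrCA; exact: D_mulP.
Qed.

Lemma inOA_E x : inOA x <-> E (lf x) = Ei (le x) /\ Ei (lh x) = - E (lh x).
Proof.
rewrite /inOA !E_leq E_invL E_invL E_opp; done.
Qed.

Lemma inOA_sub x y : inOA x -> inOA y -> inOA (loop_sub x y).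
Proof.
move=> /inOA_E [h1 h2] /inOA_E [h3 h4]; apply/inOA_E => /=.
by rewrite !E_add !Ei_add !E_opp !Ei_opp h1 h2 h3 h4 opprD.
Qed.

Lemma divL_D P x : divL P x <-> D P (E x).
Proof.
split=> [[r /E_leq hr] | [r hr]]; exists r.
  by rewrite hr E_mul E_poly.
by apply/E_leq; rewrite hr E_mul E_poly.
Qed.

Lemma two_half : cF (2^-1 : C) * 2 = 1.
Proof.
have h2 : (2 : C) != 0.
  change ((2 : Rdefinitions.R[i]) != 0); by rewrite Num.Theory.pnatr_eq0.
have -> : (2 : F) = cF 2%:R by rewrite /cF /= !rmorph_nat.
by rewrite -rmorphM mulVf // rmorph1.
Qed.

Theorem lemma1 (J : nat) (Ps : 'I_J -> {poly C}) :
  (forall j, reciprocal (Ps j)) ->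
  (forall i j : 'I_J, i != j -> coprimep (Ps i) (Ps j)) ->
  let P := \prod_(j < J) Ps j in
  [/\ (forall (j : 'I_J) (x : loop), inI P x -> inI (Ps j) x),
      (forall x y : loop, inOA x -> inOA y ->
         (forall j, inI (Ps j) (loop_sub x y)) -> inI P (loop_sub x y))
    & (forall xs : 'I_J -> loop, (forall j, inOA (xs j)) ->
         exists x : loop, inOA x /\ forall j, inI (Ps j) (loop_sub x (xs j)))].
Proof.
move=> hrec hcop P; split.
- move=> j x [hoa [he hh]]; split => //.
  by split; apply/divL_D; [move/divL_D: he | move/divL_D: hh];
    rewrite /P (bigD1 j) //=; apply: D_dvd.
- move=> x y hx hy hall; split; first exact: inOA_sub.
  have hP : forall z, (forall j, D (Ps j) (E z)) -> D P (E z).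
    move=> z hz; have -> : P = \prod_(j <- index_enum 'I_J) Ps j by [].
    by apply: D_prod_seq => //; exact: index_enum_uniq.
  by split; apply/divL_D; apply: hP => j;
    have [_ [he hh]] := hall j; apply/divL_D.
- move=> xs hxs.
  have [ge hge] := @CRT J Ps (fun j => le (xs j)) _ hcop (index_enum_uniq _).
  have [g0 hg0] := @CRT J Ps (fun j => lh (xs j)) _ hcop (index_enum_uniq _).
  set q := mulL (polyL (2^-1 : C)%:P) (addL g0 (oppL (invL g0))).
  have hx : inOA (Loop ge (invL ge) q).
    apply/inOA_E; split => /=; first exact: E_invL.
    rewrite /q Ei_mul E_mul Ei_poly E_poly Ei_add E_add !Ei_opp !E_opp Ei_invL E_invL !evC.
    ring.
  exists (Loop ge (invL ge) q); split => // j.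
  have hj := hxs j; move/inOA_E: (hj) => [hf hh].
  split; first exact: inOA_sub.
  split; apply/divL_D; rewrite /= E_add E_opp.
    exact: hge j (mem_index_enum _).
  set c := cF (2^-1 : C).
  have -> : E q - E (lh (xs j)) = E (polyL (2^-1 : C)%:P) * (E g0 - E (lh (xs j)))
      - E (polyL (2^-1 : C)%:P) * Ei (addL g0 (oppL (lh (xs j)))).
    rewrite Ei_add Ei_opp hh /q E_mul E_poly E_add E_opp E_invL !evC -/c.
    rewrite -[E (lh (xs j)) in LHS]mul1r -two_half -/c; ring.
  apply: D_sub; apply: D_mulE; first exact: hg0 j (mem_index_enum _).
  apply: D_Ei (hrec j) _; rewrite E_add E_opp; exact: hg0 j (mem_index_enum _).
Qed.
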